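(* Let $N\ge1$ and let $T_N$ be the $N\times N$ Pascal matrix $(T_N)_{jk}=\binom{j+k}{j}$, $0\le j,k<N$. Let $J_N$ be the $N\times N$ symmetric tridiagonal matrix with $$(J_N)_{kk}=k\,(2k^2+3k+2-N^2),\qquad (J_N)_{k,k+1}=(J_N)_{k+1,k}=(k+1)\big(N^2-(k+1)^2\big),$$ and all other entries zero; equivalently $(J_N)_{jk}=(N^2J-\widetilde J)_{jk}$ for $0\le j,k<N$, where $J,\widetilde J$ are the semi-infinite tridiagonal symmetric matrices with diagonals $-n$, resp. $-2n^3-3n^2-2n$, and off-diagonal entries $J_{n-1,n}=n$, resp. $\widetilde J_{n-1,n}=n^3$. Then $J_NT_N=T_NJ_N$.
   Context: Matrix indices start at $0$. *)

(* Defs.v *)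
From mathcomp Require Import all_boot all_order all_algebra.
Set Implicit Arguments. Unset Strict Implicit. Unset Printing Implicit Defensive.
Import GRing.Theory Num.Theory.
Local Open Scope ring_scope.

Definition pascal_mx (N : nat) : 'M[int]_N :=
  \matrix_(j < N, k < N) ('C(j + k, j))%:Z.

Definition JN_entry (N j k : nat) : int :=
  if j == k then (k%:Z) * (2 * k%:Z ^+ 2 + 3 * k%:Z + 2 - N%:Z ^+ 2)
  else if j.+1 == k then (k%:Z) * (N%:Z ^+ 2 - k%:Z ^+ 2)
  else if k.+1 == j then (j%:Z) * (N%:Z ^+ 2 - j%:Z ^+ 2)
  else 0.

Definition J_mx (N : nat) : 'M[int]_N :=
  \matrix_(j < N, k < N) JN_entry N j k.

(* Main.v *)
Require Import Defs.
From mathcomp Require Import all_boot all_order all_algebra.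
From mathcomp Require Import ring lra zify.
Import GRing.Theory Num.Theory.
Local Open Scope ring_scope.


Definition P (l k : nat) : int := ('C(l + k, l))%:Z.

Lemma Psym l k : P l k = P k l.
Proof.
rewrite /P; congr (Posz _).
by rewrite (addnC k l) -(bin_sub (leq_addl l k)) addnK.
Qed.

Lemma hX j k : j%:Z * (j + k)%:Z * P j.-1 k = j%:Z * j%:Z * P j k.
Proof.
case: j => [|j]; first by rewrite !mul0r.
rewrite /P -!PoszM; congr (Posz _).
by rewrite -mulnA -mulnA /= -mul_bin_diag !addSn.
Qed.

Lemma hZ j k : (j.+1)%:Z * P j.+1 k = (j + k).+1%:Z * P j k.
Proof.
rewrite /P -!PoszM; congr (Posz _).
by rewrite -mul_bin_diag addSn.
Qed.

Lemma hZ' j k : (j%:Z + 1) * P j.+1 k = (j%:Z + k%:Z + 1) * P j k.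
Proof. by rewrite -!PoszD !addn1 hZ. Qed.

Lemma hX' j k : j%:Z * (j%:Z + k%:Z) * P j.-1 k = j%:Z * j%:Z * P j k.
Proof. by rewrite -PoszD hX. Qed.


Definition E (N j k : nat) : int :=
  j%:Z * (N%:Z ^+ 2 - j%:Z ^+ 2) * P j.-1 k
  + j%:Z * (2 * j%:Z ^+ 2 + 3 * j%:Z + 2 - N%:Z ^+ 2) * P j k
  + (j%:Z + 1) * (N%:Z ^+ 2 - (j%:Z + 1) ^+ 2) * P j.+1 k.

Lemma Esym N j k : E N j k = E N k j.
Proof.
have [jk0|] := eqVneq (j + k)%N 0%N.
  by move: jk0 => /eqP; rewrite addn_eq0 => /andP[/eqP -> /eqP ->].
move=> hjk.
rewrite /E.
have hM : (j%:Z + k%:Z) * (j%:Z + 1) * (k%:Z + 1) != 0.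
  by rewrite -!PoszD !addn1 !mulf_neq0.
have hX1 := hX' j k; have hZ1 := hZ' j k; have hX2 := hX' k j; have hZ2 := hZ' k j.
rewrite (Psym k j) in hX2 hZ2 *.
move: hX1 hZ1 hX2 hZ2 hM.
set n := N%:Z; set a := j%:Z; set b := k%:Z; set B := P j k.
set X := P j.-1 k; set Z := P j.+1 k; set X' := P k.-1 j; set Z' := P k.+1 j.
move=> hX1 hZ1 hX2 hZ2 hM.
clearbody n a b B X Z X' Z'.
apply: (mulIf hM).
have -> : (a * (n ^+ 2 - a ^+ 2) * X + a * (2 * a ^+ 2 + 3 * a + 2 - n ^+ 2) * B +
 (a + 1) * (n ^+ 2 - (a + 1) ^+ 2) * Z) * ((a + b) * (a + 1) * (b + 1))
 = (n ^+ 2 - a ^+ 2) * (a + 1) * (b + 1) * (a * (a + b) * X)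
   + a * (2 * a ^+ 2 + 3 * a + 2 - n ^+ 2) * B * ((a + b) * (a + 1) * (b + 1))
   + (n ^+ 2 - (a + 1) ^+ 2) * (a + b) * (a + 1) * (b + 1) * ((a + 1) * Z) by ring.
have -> : (b * (n ^+ 2 - b ^+ 2) * X' + b * (2 * b ^+ 2 + 3 * b + 2 - n ^+ 2) * B +
 (b + 1) * (n ^+ 2 - (b + 1) ^+ 2) * Z') * ((a + b) * (a + 1) * (b + 1))
 = (n ^+ 2 - b ^+ 2) * (a + 1) * (b + 1) * (b * (b + a) * X')
   + b * (2 * b ^+ 2 + 3 * b + 2 - n ^+ 2) * B * ((a + b) * (a + 1) * (b + 1))
   + (n ^+ 2 - (b + 1) ^+ 2) * (a + b) * (a + 1) * (b + 1) * ((b + 1) * Z') by ring.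
rewrite hX1 hZ1 hX2 hZ2.
ring.
Qed.


Lemma ind_sum N (m : nat) (x : int) : \sum_(l < N) ((m == l :> nat)%:R * x) = (m < N)%:R * x.
Proof.
elim: N => [|N IH]; first by rewrite big_ord0 ltn0 mul0r.
rewrite big_ord_recr /= IH ltnS.
case: (ltngtP m N) => h /=; rewrite ?mul0r ?addr0 ?add0r //.
Qed.

Lemma SZ j : (j.+1)%:Z = j%:Z + 1.
Proof. by rewrite -addn1 PoszD. Qed.

Lemma JN_point N j l (F : nat -> int) :
  JN_entry N j l * F l =
    (j == l)%:R * (j%:Z * (2 * j%:Z ^+ 2 + 3 * j%:Z + 2 - N%:Z ^+ 2) * F j)
  + (j.+1 == l)%:R * ((j%:Z + 1) * (N%:Z ^+ 2 - (j%:Z + 1) ^+ 2) * F j.+1)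
  + (l.+1 == j)%:R * (j%:Z * (N%:Z ^+ 2 - j%:Z ^+ 2) * F j.-1).
Proof.
rewrite /JN_entry.
have [e1|n1] := eqVneq j l.
  subst l. rewrite (_ : (j.+1 == j) = false); last by lia.
  by rewrite /= mul1r !mul0r !addr0.
have [e2|n2] := eqVneq j.+1 l.
  subst l. rewrite (_ : (j.+2 == j) = false); last by lia.
  by rewrite /= mul1r !mul0r add0r addr0 SZ.
have [e3|n3] := eqVneq l.+1 j.
  subst j. by rewrite /= mul1r !mul0r !add0r.
by rewrite /= !mul0r !addr0.
Qed.

Lemma sumJ N j (F : nat -> int) : (j < N)%N ->
  \sum_(l < N) JN_entry N j l * F l =
    j%:Z * (N%:Z ^+ 2 - j%:Z ^+ 2) * F j.-1
  + j%:Z * (2 * j%:Z ^+ 2 + 3 * j%:Z + 2 - N%:Z ^+ 2) * F j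
  + (j%:Z + 1) * (N%:Z ^+ 2 - (j%:Z + 1) ^+ 2) * F j.+1.
Proof.
move=> hj.
under eq_bigr => l _ do rewrite JN_point.
rewrite !big_split /= !ind_sum hj.
have -> : \sum_(i < N) (i.+1 == j)%:R * (j%:Z * (N%:Z ^+ 2 - j%:Z ^+ 2) * F j.-1)
   = j%:Z * (N%:Z ^+ 2 - j%:Z ^+ 2) * F j.-1.
  case: j hj => [|j] hj.
    rewrite big1 => [|i _] /=.
      by rewrite !mul0r.
    by rewrite mul0r.
  under eq_bigr => i _ do rewrite eqSS eq_sym.
  by rewrite ind_sum /= ltnW // mul1r.
rewrite mul1r.
case: (ltnP j.+1 N) => h; first by rewrite mul1r; ring.
have -> : N = j.+1 by lia.
rewrite SZ subrr mulr0 !mul0r addr0; ring.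
Qed.


Lemma JN_sym N j k : JN_entry N j k = JN_entry N k j.
Proof.
rewrite /JN_entry.
have [->|n1] := eqVneq j k; first by [].
have [e2|n2] := eqVneq j.+1 k.
  have [e3|n3] := eqVneq k.+1 j; last by [].
  exfalso; lia.
by [].
Qed.

Theorem theorem3p2 (N : nat) (hN : (1 <= N)%N) :
  J_mx N *m pascal_mx N = pascal_mx N *m J_mx N.
Proof.
apply/matrixP => i k; rewrite !mxE.
under eq_bigr => l _ do rewrite !mxE.
under [RHS]eq_bigr => l _ do rewrite !mxE -/(P i l) Psym JN_sym mulrC.
rewrite -/(P _ _).
rewrite (@sumJ N i (fun l => P l k)) // (@sumJ N k (fun l => P l i)) //.
exact: (Esym N i k).
Qed.
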